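(* Let $3\le n\le m$, let $g_1,\dots,g_n\in\mathbb{F}_{2^m}$ be linearly independent over $\mathbb{F}_2$, and let $\mathcal{G}$ be the Gabidulin code over $\mathbb{F}_{2^m}$ (with $q=2$) of dimension $k=1$ with respect to $g_1,\dots,g_n$. Let $f(x)=x^4+bx^2+cx$ with $b,c\in\mathbb{F}_{2^m}$ and $\sigma_f=(f(g_1),\dots,f(g_n))$. Then $\sigma_f$ is not a deep hole of $\mathcal{G}$ in the rank metric if and only if there exist $\beta_1,\beta_2\in\langle g_1,\dots,g_n\rangle$ with $\beta_1\ne0$, $\beta_2\ne0$, $\beta_1\neq\beta_2$ and $\beta_1^2+\beta_1\beta_2+\beta_2^2=b$. In particular, if $n=m$, then $\sigma_f$ is a deep hole of $\mathcal{G}$ if and only if $b=0$ and $m$ is odd.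
   Context: $\langle g_1,\dots,g_n\rangle$ is the $\mathbb{F}_2$-span. Rank distance: $d_R(\mathbf{u},\mathbf{v})=\dim_{\mathbb{F}_2}\langle u_1-v_1,\dots,u_n-v_n\rangle$, $d_R(\mathbf{u},C)=\min_{\mathbf{c}\in C}d_R(\mathbf{u},\mathbf{c})$; a deep hole is a word attaining the covering radius $\max_{\mathbf{u}}d_R(\mathbf{u},C)$, which for $\mathcal{G}$ is $n-k=n-1$. The Gabidulin code of dimension $1$ is $\mathcal{G}=\{(\lambda g_1,\dots,\lambda g_n):\lambda\in\mathbb{F}_{2^m}\}$ (evaluations of $2$-linearized polynomials $\lambda x$ of $2$-degree $<1$). *)

(* Defs.v *)
From HB Require Import structures.
From mathcomp Require Import all_boot all_order all_algebra all_field.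
Set Implicit Arguments. Unset Strict Implicit. Unset Printing Implicit Defensive.
Import GRing.Theory.
Local Open Scope ring_scope.

Section RankMetric.
Variable F : finFieldType.

(* F_2-span <v_1,...,v_n>: all F_2-linear combinations = all subset sums. *)
Definition f2span n (v : 'I_n -> F) : {set F} :=
  [set \sum_(i in S) v i | S : {set 'I_n}].

Definition f2indep_on n (v : 'I_n -> F) (S : {set 'I_n}) : bool :=
  [forall T : {set 'I_n},
     (T \subset S) ==> ((\sum_(i in T) v i == 0) ==> (T == set0))].

(* dim_{F_2} <v_1,...,v_n> = rank of the family = max size of an
   F_2-independent subfamily. *)
Definition f2rank n (v : 'I_n -> F) : nat :=
  \max_(S : {set 'I_n} | f2indep_on v S) #|S|.

Definition rank_dist n (u v : {ffun 'I_n -> F}) : nat :=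
  f2rank (fun i => u i - v i).

Definition gab1_word n (g : 'I_n -> F) (lam : F) : {ffun 'I_n -> F} :=
  [ffun i => lam * g i].

(* d_R(u, G) = min over codewords (n is an upper bound, used as neutral). *)
Definition dist_to_gab1 n (g : 'I_n -> F) (u : {ffun 'I_n -> F}) : nat :=
  \big[minn/n]_(lam : F) rank_dist u (gab1_word g lam).

Definition covering_radius_gab1 n (g : 'I_n -> F) : nat :=
  \max_(u : {ffun 'I_n -> F}) dist_to_gab1 g u.

Definition deep_hole_gab1 n (g : 'I_n -> F) (u : {ffun 'I_n -> F}) : Prop :=
  dist_to_gab1 g u = covering_radius_gab1 g.

End RankMetric.

(* Main.v *)
Require Import Defs.
From HB Require Import structures.
From mathcomp Require Import all_boot all_order all_algebra all_field.
Import GRing.Theory.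
Local Open Scope ring_scope.
From mathcomp Require Import all_fingroup all_solvable.
From mathcomp Require Import ring zify.
From Stdlib Require Import Classical.

Module Aux.
Set Implicit Arguments. Unset Strict Implicit.
Import GRing.Theory.
Local Open Scope ring_scope.

Section Aux.
Variable F : finFieldType.
Hypothesis h2 : (2%:R : F) = 0.

Lemma addxx (x : F) : x + x = 0.
Proof. by rewrite -mulr2n -mulr_natr h2 mulr0. Qed.

Lemma oppF (x : F) : - x = x.
Proof. by apply/eqP; rewrite eq_sym -subr_eq0 opprK addxx. Qed.

Lemma sqrD (x y : F) : (x + y) ^+ 2 = x ^+ 2 + y ^+ 2.
Proof. by rewrite sqrrD mulr2n addxx addr0. Qed.

Lemma exp4 (x : F) : x ^+ 4 = (x ^+ 2) ^+ 2.
Proof. by rewrite -exprM. Qed.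

Definition symd n (A B : {set 'I_n}) := [set i | (i \in A) (+) (i \in B)].

Lemma sum_symd n (v : 'I_n -> F) A B :
  \sum_(i in symd A B) v i = \sum_(i in A) v i + \sum_(i in B) v i.
Proof.
rewrite !(big_mkcond (fun i => i \in _)) -big_split /=; apply: eq_bigr => i _.
rewrite inE; case: (i \in A); case: (i \in B) => /=;
  by rewrite ?addr0 ?add0r ?addxx.
Qed.

Lemma symd0 n (A B : {set 'I_n}) : symd A B = set0 -> A = B.
Proof.
move=> H; apply/setP => i; move/setP/(_ i): H; rewrite !inE.
by case: (i \in A); case: (i \in B).
Qed.

Definition zs n (v : 'I_n -> F) (T : {set 'I_n}) :=
  (T != set0) && (\sum_(i in T) v i == 0).

Lemma zs_nsub n (v : 'I_n -> F) S T : f2indep_on v S -> zs v T -> ~~ (T \subset S).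
Proof.
move=> indS /andP[T0 sT]; apply/negP => TS.
move/forallP/(_ T): indS; rewrite TS sT /=.
by rewrite (negbTE T0).
Qed.

Lemma rank_le1 n (v : 'I_n -> F) T : zs v T -> (f2rank v <= n.-1)%N.
Proof.
move=> zT; apply/bigmax_leqP => S indS.
case/subsetPn: (zs_nsub indS zT) => a aT aS.
have : S \subset [set~ a].
  apply/subsetP => x xS; rewrite !inE; apply/eqP => xa.
  by rewrite -xa xS in aS.
by move/subset_leq_card; rewrite cardsC1 card_ord.
Qed.

Lemma rank_le2 n (v : 'I_n -> F) T1 T2 :
  zs v T1 -> zs v T2 -> T1 != T2 -> (f2rank v <= n.-2)%N.
Proof.
move=> z1 z2 T12; apply/bigmax_leqP => S indS.
have z3 : zs v (symd T1 T2).
  apply/andP; split.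
    by apply/eqP => /symd0 E; rewrite E eqxx in T12.
  rewrite sum_symd; move: z1 z2 => /andP[_ /eqP ->] /andP[_ /eqP ->].
  by rewrite addr0.
have [a [b [ab aS bS]]] : exists a b, [/\ a != b, a \notin S & b \notin S].
  case/subsetPn: (zs_nsub indS z1) => a aT aS.
  case/subsetPn: (zs_nsub indS z2) => b bT bS.
  case: (eqVneq a b) => [eab | nab]; last by exists a, b.
  case/subsetPn: (zs_nsub indS z3) => c cT cS.
  exists a, c; split => //; apply/eqP => eac.
  by move: cT; rewrite -eac inE aT; rewrite -eab in bT; rewrite bT.
have : S \subset ~: [set a; b].
  apply/subsetP => x xS; rewrite !inE; apply/negP => /orP[] /eqP xe.
    by rewrite -xe xS in aS.
  by rewrite -xe xS in bS.
move/subset_leq_card; have := cardsC [set a; b].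
rewrite cards2 ab card_ord /= => H1 H2.
lia.
Qed.

Lemma rank_ge n (v : 'I_n -> F) :
  (forall T1 T2, zs v T1 -> zs v T2 -> T1 = T2) -> (n.-1 <= f2rank v)%N.
Proof.
move=> uniq.
case: (pickP (zs v)) => [T0 z0 | none].
  have /set0Pn [a aT0] : T0 != set0 by case/andP: z0.
  have ind : f2indep_on v [set~ a].
    apply/forallP => T; apply/implyP => TS; apply/implyP => sT.
    apply/negPn/negP => T0'.
    have zT : zs v T by rewrite /zs T0' sT.
    rewrite (uniq _ _ zT z0) in TS.
    by move/subsetP/(_ a aT0): TS; rewrite !inE eqxx.
  apply: leq_trans (leq_bigmax_cond _ ind).
  by rewrite cardsC1 card_ord.
have ind : f2indep_on v [set: 'I_n].
  apply/forallP => T; apply/implyP => _; apply/implyP => sT.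
  apply/negPn/negP => T0'.
  by move: (none T); rewrite /zs T0' sT.
apply: leq_trans (leq_bigmax_cond _ ind).
by rewrite cardsT card_ord leq_pred.
Qed.

End Aux.

Lemma bigmin_le (T : finType) (k : nat) (f : T -> nat) x :
  (\big[minn/k]_(y : T) f y <= f x)%N.
Proof.
have : x \in index_enum T by rewrite mem_index_enum.
elim: (index_enum T) => // a r IH; rewrite inE big_cons.
case/orP => [/eqP -> | xr]; first exact: geq_minl.
exact: leq_trans (geq_minr _ _) (IH xr).
Qed.

Lemma bigmin_ge (T : finType) (k j : nat) (f : T -> nat) :
  (j <= k)%N -> (j <= \big[minn/k]_(y : T) f y)%N <-> (forall x, j <= f x)%N.
Proof.
move=> jk; split.
  by move=> H x; apply: leq_trans H (bigmin_le _ _ _).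
move=> H; elim/big_ind: _ => //.
by move=> a b ja jb; rewrite leq_min ja jb.
Qed.

Section Main.
Variable F : finFieldType.
Hypothesis h2 : (2%:R : F) = 0.
Variable n : nat.
Hypothesis h3n : (3 <= n)%N.
Variable g : 'I_n -> F.
Hypothesis hgT : forall T : {set 'I_n}, \sum_(i in T) g i = 0 -> T = set0.

Definition sp (T : {set 'I_n}) := \sum_(i in T) g i.

Lemma sp_inj : injective sp.
Proof.
move=> T1 T2 E; apply: symd0; apply: hgT.
by rewrite sum_symd // -/(sp T1) E addxx.
Qed.

Lemma sp0 T : (sp T == 0) = (T == set0).
Proof.
apply/eqP/eqP => [/hgT // | ->]; by rewrite /sp big_set0.
Qed.

Lemma zsL (L : F -> F) (v : 'I_n -> F) T :
  (forall x y, L (x + y) = L x + L y) -> L 0 = 0 ->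
  (forall i, v i = L (g i)) ->
  zs v T = (sp T != 0) && (L (sp T) == 0).
Proof.
move=> LD L0 hv; rewrite /zs sp0; congr (_ && _).
rewrite /sp (big_morph L LD L0); congr (_ == _).
by apply: eq_bigr => i _.
Qed.

Definition rk (u : {ffun 'I_n -> F}) lam := rank_dist u (gab1_word g lam).

Lemma i0P : (0 < n)%N. Proof. exact: leq_trans _ h3n. Qed.
Definition i0 : 'I_n := Ordinal i0P.

Lemma dist_le u : (dist_to_gab1 g u <= n.-1)%N.
Proof.
have g0 : g i0 != 0.
  apply/eqP => e; have : [set i0] = set0 by apply: hgT; rewrite big_set1.
  by move/setP/(_ i0); rewrite !inE eqxx.
apply: leq_trans (bigmin_le _ _ (u i0 / g i0)) _.
rewrite /rank_dist.
apply: (rank_le1 (T:=[set i0])).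
rewrite /zs big_set1 /gab1_word ffunE divfK // subrr eqxx andbT.
by apply/eqP => /setP/(_ i0); rewrite !inE eqxx.
Qed.

Lemma cov_eq : covering_radius_gab1 g = n.-1.
Proof.
apply/eqP; rewrite eqn_leq; apply/andP; split.
  by apply/bigmax_leqP => u _; apply: dist_le.
set u0 := [ffun i => g i ^+ 2].
apply: leq_trans (leq_bigmax_cond u0 isT).
apply/bigmin_ge; first exact: leq_pred.
move=> lam; apply: rank_ge => T1 T2.
have LD : forall x y : F, (fun z => z ^+ 2 - lam * z) (x + y) =
   (fun z => z ^+ 2 - lam * z) x + (fun z => z ^+ 2 - lam * z) y.
  by move=> x y /=; rewrite sqrD //; ring.
have L0 : (fun z : F => z ^+ 2 - lam * z) 0 = 0 by rewrite expr0n mulr0 subr0.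
have hv : forall i, (fun i => u0 i - (gab1_word g lam) i) i =
    (fun z => z ^+ 2 - lam * z) (g i) by move=> i; rewrite /= !ffunE.
rewrite !(zsL _ LD L0 hv) /=.
have key : forall T, sp T != 0 -> sp T ^+ 2 - lam * sp T == 0 -> sp T = lam.
  move=> T nz; rewrite subr_eq0 => /eqP e.
  by apply: (mulIf nz); rewrite -expr2 e.
move=> /andP[n1 /(key _ n1) e1] /andP[n2 /(key _ n2) e2].
by apply: sp_inj; rewrite e1 e2.
Qed.

Lemma deepP u : deep_hole_gab1 g u <-> (forall lam, (n.-1 <= rk u lam)%N).
Proof.
rewrite /deep_hole_gab1 cov_eq.
have E := bigmin_ge (fun lam => rk u lam) (leq_pred n).
split.
  by move=> H; apply/E; rewrite /dist_to_gab1 in H; rewrite H.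
by move=> H; apply/eqP; rewrite eqn_leq dist_le; apply/E.
Qed.

Lemma spanP x : reflect (exists T, x = sp T) (x \in f2span g).
Proof.
apply: (iffP imsetP) => [[T _ e] | [T e]]; exists T => //.
Qed.

Lemma part1 b c :
  ~ deep_hole_gab1 g [ffun i => g i ^+ 4 + b * g i ^+ 2 + c * g i] <->
     exists beta1 beta2 : F,
       [/\ beta1 \in f2span g, beta2 \in f2span g,
           beta1 != 0, beta2 != 0 &
           beta1 != beta2 /\ beta1 ^+ 2 + beta1 * beta2 + beta2 ^+ 2 = b].
Proof.
set sigma := [ffun i => _].
have LD : forall lam (x y : F),
  (fun z => z ^+ 4 + b * z ^+ 2 + c * z - lam * z) (x + y) =
  (fun z => z ^+ 4 + b * z ^+ 2 + c * z - lam * z) x +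
  (fun z => z ^+ 4 + b * z ^+ 2 + c * z - lam * z) y.
  by move=> lam x y /=; rewrite !exp4 !sqrD //; ring.
have L0 : forall lam, (fun z : F => z ^+ 4 + b * z ^+ 2 + c * z - lam * z) 0 = 0.
  by move=> lam /=; rewrite !expr0n !mulr0 !addr0 subr0.
have hv : forall lam i, (fun i => sigma i - (gab1_word g lam) i) i =
    (fun z => z ^+ 4 + b * z ^+ 2 + c * z - lam * z) (g i).
  by move=> lam i; rewrite /= !ffunE.
split.
  move=> Hd; apply: NNPP => Hno; apply: Hd; apply/deepP => lam.
  apply: rank_ge => T1 T2.
  rewrite !(zsL _ (LD lam) (L0 lam) (hv lam)) /=.
  move=> /andP[n1 /eqP e1] /andP[n2 /eqP e2].
  case: (eqVneq T1 T2) => // T12; exfalso; apply: Hno.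
  exists (sp T1), (sp T2); split => //; try by apply/spanP; eexists.
  split; first by apply/eqP => /sp_inj E; rewrite E eqxx in T12.
  move: n1 n2 e1 e2; set x1 := sp T1; set x2 := sp T2 => n1 n2 e1 e2.
  have f1 : x1 ^+ 3 + b * x1 + c - lam = 0.
    apply: (mulfI n1); rewrite mulr0 -e1; ring.
  have f2 : x2 ^+ 3 + b * x2 + c - lam = 0.
    apply: (mulfI n2); rewrite mulr0 -e2; ring.
  have : (x1 - x2) * (x1 ^+ 2 + x1 * x2 + x2 ^+ 2 + b) = 0.
    transitivity ((x1 ^+ 3 + b * x1 + c - lam) - (x2 ^+ 3 + b * x2 + c - lam)).
      by ring.
    by rewrite f1 f2 subrr.
  move/eqP; rewrite mulf_eq0 subr_eq0 => /orP[/eqP E | ].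
    by move/eqP: T12; rewrite /x1 /x2 in E; move/sp_inj: E.
  by rewrite addr_eq0 oppF // => /eqP.
move=> [b1 [b2 [s1 s2 nz1 nz2 [ne hb]]]] /deepP /(_ (b1 ^+ 3 + b * b1 + c)).
case/spanP: s1 => T1 e1; case/spanP: s2 => T2 e2.
set lam := b1 ^+ 3 + b * b1 + c.
have z1 : zs (fun i => sigma i - (gab1_word g lam) i) T1.
  rewrite (zsL _ (LD lam) (L0 lam) (hv lam)) -e1 nz1 /=.
  by apply/eqP; rewrite /lam; ring.
have z2 : zs (fun i => sigma i - (gab1_word g lam) i) T2.
  rewrite (zsL _ (LD lam) (L0 lam) (hv lam)) -e2 nz2 /=.
  apply/eqP; rewrite /lam -hb.
  transitivity ((2%:R : F) * (b2 * (b2 - b1) * (b1 ^+ 2 + b1 * b2 + b2 ^+ 2))).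
    by ring.
  by rewrite h2 mul0r.
have T12 : T1 != T2 by apply: contraNneq ne => E; rewrite e1 e2 E.
have := rank_le2 h2 z1 z2 T12; rewrite /rk => H1 H2.
have := leq_trans H2 H1; lia.
Qed.

End Main.

Lemma mod3_odd k : (2 ^ k.*2.+1 %% 3 = 2)%N.
Proof.
elim: k => // k IH; rewrite doubleS !expnS mulnA -modnMmr.
by rewrite -expnS IH.
Qed.

Lemma mod3_even k : (2 ^ k.*2 %% 3 = 1)%N.
Proof.
elim: k => // k IH; rewrite doubleS !expnS mulnA -modnMmr IH.
by [].
Qed.

Lemma exQ (F : finFieldType) (m : nat) (hF : #|F| = (2 ^ m)%N) (hm : (3 <= m)%N)
  (h2 : (2%:R : F) = 0) (b : F) :
  (exists beta1 beta2 : F,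
     [/\ beta1 != 0, beta2 != 0, beta1 != beta2 &
         beta1 ^+ 2 + beta1 * beta2 + beta2 ^+ 2 = b]) <-> ~ (b = 0 /\ odd m).
Proof.
split.
  move=> [b1 [b2 [nz1 nz2 ne hb]]] [b0 hodd].
  set t := b1 / b2.
  have e1 : b1 = t * b2 by rewrite /t divfK.
  have ht : t ^+ 2 + t + 1 = 0.
    have : (t ^+ 2 + t + 1) * b2 ^+ 2 = 0.
      by rewrite -b0 -hb e1; ring.
    by move/eqP; rewrite mulf_eq0 expf_eq0 (negbTE nz2) orbF => /eqP.
  have t1 : t != 1 by apply: contraNneq ne => E; rewrite e1 E mul1r.
  have t0 : t != 0 by apply: contraNneq nz1 => E; rewrite e1 E mul0r.
  have t3 : t ^+ 3 = 1.
    apply/eqP; rewrite -subr_eq0; apply/eqP.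
    transitivity ((t - 1) * (t ^+ 2 + t + 1)); first by ring.
    by rewrite ht mulr0.
  have tc := expf_card t.
  rewrite hF (divn_eq (2 ^ m) 3) -(odd_double_half m) hodd add1n mod3_odd in tc.
  rewrite exprD mulnC exprM t3 expr1n mul1r in tc.
  have : t * (t - 1) = 0.
    by transitivity (t ^+ 2 - t); [ring | rewrite tc subrr].
  move/eqP; rewrite mulf_eq0 subr_eq0 (negbTE t0) (negbTE t1) //.
move=> Hn.
case: (eqVneq b 0) => [b0 | bn0].
  have hev : ~~ odd m by apply/negP => o; apply: Hn.
  have dv : (3 %| #|[set: {unit F}]|)%N.
    rewrite card_finField_unit hF -(odd_double_half m) (negbTE hev) add0n.
    rewrite -subn1 -eqn_mod_dvd ?expn_gt0 //.
    by rewrite mod3_even.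
  case: (Cauchy (isT : prime 3) dv) => u _ ou.
  set t := val u.
  have t3 : t ^+ 3 = 1.
    by rewrite /t -FinRing.val_unitX -ou expg_order.
  have t1 : t != 1.
    apply/eqP => E; have u1 : u = 1%g by apply: val_inj; rewrite FinRing.val_unit1 -/t E.
    by move: ou; rewrite u1 order1.
  have t0 : t != 0 by apply/eqP => E; move: t3; rewrite E expr0n /= => /eqP; rewrite eq_sym oner_eq0.
  have ht : t ^+ 2 + t + 1 = 0.
    have : (t - 1) * (t ^+ 2 + t + 1) = 0.
      by transitivity (t ^+ 3 - 1); [ring | rewrite t3 subrr].
    by move/eqP; rewrite mulf_eq0 subr_eq0 (negbTE t1) => /eqP.
  exists t, 1; split => //; first exact: oner_neq0.
  by rewrite b0 mulr1 expr1n.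
have [t [t0 t1 tq]] : exists t : F, [/\ t != 0, t != 1 & t ^+ 2 + t + 1 != 0].
  apply: NNPP => H.
  pose s := if [pick r : F | r ^+ 2 + r + 1 == 0] is Some r
            then [:: 0; 1; r; r + 1] else [:: 0; 1].
  have sub : forall t : F, t \in s.
    move=> t; rewrite /s.
    case: (eqVneq t 0) => [-> | nt0]; first by case: pickP => [r _|_]; rewrite !inE eqxx.
    case: (eqVneq t 1) => [-> | nt1]; first by case: pickP => [r _|_]; rewrite !inE eqxx ?orbT.
    case: (eqVneq (t ^+ 2 + t + 1) 0) => [ht | nq]; last first.
      by exfalso; apply: H; exists t.
    case: pickP => [r /eqP hr | none]; last by move: (none t); rewrite ht eqxx.
    have : (t + r) * (t + r + 1) = 0.
      transitivity (t ^+ 2 + t + 1 - (r ^+ 2 + r + 1) + 2%:R * (t * r + r ^+ 2 + r)).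
        by ring.
      by rewrite ht hr h2 !mul0r !subrr addr0.
    move/eqP; rewrite mulf_eq0 -(addrA t r 1) !addr_eq0 !oppF // => /orP[] /eqP ->;
      by rewrite !inE eqxx ?orbT.
  have : (#|F| <= size s)%N.
    apply: leq_trans (card_size s); apply: subset_leq_card.
    by apply/subsetP => x _; apply: sub.
  have : (size s <= 4)%N by rewrite /s; case: pickP.
  have : (2 ^ 3 <= 2 ^ m)%N by rewrite leq_exp2l.
  rewrite hF; lia.
have sq_inj : injective (fun x : F => x ^+ 2).
  move=> x y /= E.
  have : (x + y) ^+ 2 = 0 by rewrite sqrD // E addxx.
  by move/eqP; rewrite expf_eq0 /= addr_eq0 oppF // => /eqP.
case: (injF_bij sq_inj) => sr _ srK.
set s := b / (t ^+ 2 + t + 1).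
have s0 : s != 0 by rewrite mulf_neq0 ?invr_eq0.
set b2 := sr s.
have b2s : b2 ^+ 2 = s by exact: srK.
have nz2 : b2 != 0 by apply: contraNneq s0 => E; rewrite -b2s E expr0n.
exists (t * b2), b2; split.
- by rewrite mulf_neq0.
- by [].
- by apply: contraNneq t1 => E; apply/eqP; apply: (mulIf nz2); rewrite mul1r.
- transitivity (b2 ^+ 2 * (t ^+ 2 + t + 1)); first by ring.
  by rewrite b2s /s divfK.
Qed.

End Aux.
Import Aux.

Theorem proposition7 (F : finFieldType) (m n : nat)
  (hF : #|F| = (2 ^ m)%N) (h3n : (3 <= n)%N) (hnm : (n <= m)%N)
  (g : 'I_n -> F) (hg : f2indep_on g [set: 'I_n]) (b c : F) :
  let sigma := [ffun i => g i ^+ 4 + b * g i ^+ 2 + c * g i] in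
  (~ deep_hole_gab1 g sigma <->
     exists beta1 beta2 : F,
       [/\ beta1 \in f2span g, beta2 \in f2span g,
           beta1 != 0, beta2 != 0 &
           beta1 != beta2 /\ beta1 ^+ 2 + beta1 * beta2 + beta2 ^+ 2 = b])
  /\ (n = m -> (deep_hole_gab1 g sigma <-> b = 0 /\ odd m)).
Proof.
move=> sigma.
have h2 : (2%:R : F) = 0 := pcharf0 (card_finPcharP hF (isT : prime 2)).
have hgT : forall T : {set 'I_n}, \sum_(i in T) g i = 0 -> T = set0.
  by move=> T sT; move/forallP/(_ T): hg; rewrite subsetT sT eqxx /= => /eqP.
have P1 := part1 h2 h3n hgT b c.
split; first exact: P1.
move=> nm.
have spanT : forall x, x \in f2span g.
  have E : f2span g = [set: F].
    apply/eqP; rewrite eqEcard subsetT cardsT /f2span card_imset; last exact: sp_inj.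
    have -> : #|{set 'I_n}| = (2 ^ n)%N.
      by rewrite -cardsT -powersetT card_powerset cardsT card_ord.
    by rewrite /= hF nm.
  by move=> x; rewrite E inE.
have hm : (3 <= m)%N by rewrite -nm.
have Q := exQ hF hm h2 b.
split.
  move=> d; apply: NNPP => H.
  have [b1 [b2 [nz1 nz2 ne hb]]] := proj2 Q H.
  apply: (proj2 P1 _ d); exists b1, b2; split => //; exact: spanT.
move=> H; apply: NNPP => nd.
have [b1 [b2 [_ _ nz1 nz2 [ne hb]]]] := proj1 P1 nd.
by apply: (proj1 Q _ H); exists b1, b2; split.
Qed.
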